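(* Let $m\ge0$ be an integer and write $s_n=s_n^{(1,m+2)}$. Then for all $n\ge0$, \[ s_n^2=s_n+2\sum_{k=0}^{n-m-2}\sum_{r=m+2}^{n-k}P_{r-1}^{\{-2,-1,m\}}s_k s_{n-k-r}^2 . \]
   Context: For positive integers $p<q$, $s_n^{(p,q)}$ is defined by $s_n^{(p,q)}=\delta_{0,n}+s_{n-p}^{(p,q)}+s_{n-q}^{(p,q)}$ for $n\ge0$ and $s_n^{(p,q)}=0$ for $n<0$. $\delta_{i,j}$ is $1$ if $i=j$ and $0$ otherwise. For a finite set $W$ of integers, $P_n^W$ is the number of permutations $\pi$ of $\{1,\dots,n\}$ with $\pi(i)-i\in W$ for all $i$ (the permanent of the $n\times n$ $(0,1)$ Toeplitz matrix whose $(i,j)$ entry is $1$ iff $j-i\in W$), with $P_0^W=1$. Empty sums are $0$. *)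

(* Defs.v *)
From mathcomp Require Import all_boot all_order all_algebra all_fingroup.
Set Implicit Arguments. Unset Strict Implicit. Unset Printing Implicit Defensive.
Import GRing.Theory Num.Theory.

(* Fuel-based definition of s_n^{(p,q)}:
   s_n = [n = 0] + s_{n-p} + s_{n-q}, with s_n = 0 for n < 0. *)
Fixpoint s_fuel (p q fuel n : nat) : nat :=
  match fuel with
  | 0 => (n == 0)%N
  | fuel'.+1 =>
      ((n == 0)%N + (if (p <= n)%N then s_fuel p q fuel' (n - p) else 0)
                 + (if (q <= n)%N then s_fuel p q fuel' (n - q) else 0))%N
  end.

(* For p >= 1 the fuel n.+1 is sufficient. *)
Definition sseq (p q n : nat) : nat := s_fuel p q n.+1 n.

(* P_n^W : number of permutations pi of {0,...,n-1} with pi(i) - i in W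
   (equivalently of {1,...,n}, since only differences matter). *)
Definition Pperm (W : seq int) (n : nat) : nat :=
  #|[set sigma : 'S_n | [forall i : 'I_n, ((sigma i)%:Z - (i : nat)%:Z)%R \in W]]|.

(* Main.v *)
Require Import Defs.
From mathcomp Require Import all_boot all_order all_algebra all_fingroup.
Import GRing.Theory Num.Theory.
From mathcomp Require Import zify.
Set Implicit Arguments. Unset Strict Implicit. Unset Printing Implicit Defensive.

Lemma s_fuel_eq (q f1 f2 n : nat) : 0 < q -> n < f1 -> n < f2 ->
  s_fuel 1 q f1 n = s_fuel 1 q f2 n.
Proof.
move=> q0; elim: f1 f2 n => [|f1 IH] [|f2] n //= h1 h2.
congr (_ + _ + _).
- case: ifP => // hn; apply: IH; lia.
- case: ifP => // hn; apply: IH; lia.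
Qed.

Lemma sseq0 q : 0 < q -> sseq 1 q 0 = 1.
Proof. by case: q. Qed.

Lemma s_fuelS q f n : s_fuel 1 q f.+1 n =
  ((n == 0) + (if 1 <= n then s_fuel 1 q f (n - 1) else 0)
   + (if q <= n then s_fuel 1 q f (n - q) else 0))%N.
Proof. by []. Qed.

Lemma sseqS q n : 0 < q ->
  sseq 1 q n.+1 = sseq 1 q n + (if q <= n.+1 then sseq 1 q (n.+1 - q) else 0).
Proof.
move=> q0; rewrite /sseq s_fuelS subn1.
have -> : (n.+1 == 0) = false by [].
have -> : (1 <= n.+1) = true by [].
rewrite add0n.
congr (_ + _).
case: ifP => // h; apply: s_fuel_eq => //; lia.
Qed.

Fixpoint Ff (m fuel x L : nat) : nat :=
  match fuel with
  | 0 => 0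
  | f.+1 =>
    match L with
    | 0 => (x == 0)
    | L'.+1 => (if x is x'.+1 then Ff m f x' L' else 0)
               + (if x <= L' then Ff m f (m - x) (L' - x) else 0)
    end
  end.

Definition F m x L := Ff m L.+1 x L.

Lemma Ff_eq m f1 f2 x L : L < f1 -> L < f2 -> Ff m f1 x L = Ff m f2 x L.
Proof.
elim: f1 f2 x L => [|f1 IH] [|f2] x [|L] //= h1 h2.
congr (_ + _).
- case: x => // x; apply: IH; lia.
- case: ifP => // h; apply: IH; lia.
Qed.

Lemma F0 m x : F m x 0 = (x == 0).
Proof. by []. Qed.

Lemma FS m x L : F m x L.+1 =
  (if x is x'.+1 then F m x' L else 0) + (if x <= L then F m (m - x) (L - x) else 0).
Proof.
have E : forall f, Ff m f.+1 x L.+1 = (if x is x'.+1 then Ff m f x' L else 0)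
               + (if x <= L then Ff m f (m - x) (L - x) else 0) by [].
rewrite /F E; clear E; congr (_ + _); case: ifP => // h; apply: Ff_eq; lia.
Qed.

Lemma F_small m x L : L < x -> F m x L = 0.
Proof.
elim: L x => [|L IH] x h; first by rewrite F0; case: x h.
rewrite FS; case: x h => [|x] h //.
rewrite IH; last lia.
case: ifP => //; lia.
Qed.

Lemma sum_shift a b (f : nat -> nat) :
  \sum_(a <= i < b) f i = \sum_(0 <= i < b - a) f (i + a).
Proof. by rewrite -{1}[a]add0n big_addn. Qed.

Lemma sum_split b a c (f : nat -> nat) : a <= b -> b <= c ->
  \sum_(a <= i < c) f i = \sum_(a <= i < b) f i + \sum_(b <= i < c) f i.
Proof. move=> h1 h2; exact: (@big_cat_nat _ _ _ b a c predT f h1 h2). Qed.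

Lemma if_leq0 (A B : nat) : (if 0 <= A then B else 0) = B.
Proof. by []. Qed.

Section Alg.
Variable m : nat.
Local Notation s := (sseq 1 (m + 2)).
Local Notation Q n := (s n ^ 2).

Lemma sS n : s n.+1 = s n + (if m + 2 <= n.+1 then s (n.+1 - (m + 2)) else 0).
Proof. by apply: sseqS; lia. Qed.

Lemma s0 : s 0 = 1.
Proof. by apply: sseq0; lia. Qed.

Lemma Xlem c x : x <= m -> x <= c ->
  s (c - x) * s c.+1 = \sum_(0 <= L < c.+1) F m x L * Q (c - L).
Proof.
elim/ltn_ind: c x => c IH x xm xc.
rewrite big_nat_recl // F0 subn0.
under eq_bigr do rewrite FS mulnDl.
rewrite big_split /= sS mulnDr addnA.
congr (_ + _).
- case: x xm xc => [|x] xm xc.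
  + rewrite big1 ?addn0 ?subn0 ?mulnn // (_ : (0 == 0) = true) // mul1n //.
  + rewrite (_ : (x.+1 == 0) = false) // mul0n add0n.
    case: c IH xc => [|c] IH xc; first lia.
    rewrite (IH c) //; try lia.
- rewrite (big_cat_nat _ (n := x)) //= big1_seq ?add0n; last first.
    move=> L; rewrite mem_iota => /andP[_ hL].
    by case: ifP => //; lia.
  rewrite sum_shift.
  case: ifP => hc.
  + rewrite (_ : s (c.+1 - (m+2)) = s ((c-x).-1 - (m-x))); last (congr s; lia).
    rewrite (_ : s (c-x) = s ((c-x).-1.+1)); last (congr s; lia).
    rewrite mulnC IH; try lia.
    have -> : (c - x).-1.+1 = c - x by lia.
    apply: eq_big_nat => L hL.
    rewrite ifT; last lia.
    congr (F _ _ _ * s _ ^ 2); lia.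
  + rewrite muln0 big1_seq // => L; rewrite mem_iota => /andP[_ hL].
    rewrite ifT; last lia.
    rewrite F_small //; lia.
Qed.

Definition R n := \sum_(m + 2 <= r < n.+1) F m 0 (r - 1) * Q (n - r).

Lemma R_small n : n < m + 2 -> R n = 0.
Proof. by move=> h; rewrite /R big_geq //. Qed.

Lemma cross n : (if m + 2 <= n.+1 then s (n.+1 - (m + 2)) * s n else 0) = R n.+1.
Proof.
case: ifP => h; last by rewrite R_small //; lia.
case: n h => [|n] h; first lia.
rewrite (_ : n.+2 - (m+2) = n - m); last lia.
rewrite Xlem //; last lia.
rewrite (@sum_split (m)); last lia; last lia.
rewrite big1_seq ?add0n; last first.
  by move=> L; rewrite mem_iota => /andP[_ hL]; rewrite F_small //; lia.
rewrite /R sum_shift [in RHS]sum_shift.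
have -> : n.+1 - m = n.+3 - (m + 2) by lia.
apply: eq_big_nat => i hi.
rewrite (_ : i + (m + 2) - 1 = (i + m).+1); last lia.
rewrite FS !subn0 add0n; congr (F _ _ _ * s _ ^ 2); lia.
Qed.

Lemma Qrec n : Q n.+1 = Q n + (if m + 2 <= n.+1 then Q (n.+1 - (m + 2)) else 0) + 2 * R n.+1.
Proof.
rewrite -cross sS; case: ifP => h; last by rewrite addn0; lia.
by rewrite sqrnD (mulnC (s n)).
Qed.

Definition C n := \sum_(0 <= k < n.+1) s k * R (n - k).

Lemma Crec n : C n.+1 = R n.+1 + C n + (if m + 2 <= n.+1 then C (n.+1 - (m + 2)) else 0).
Proof.
rewrite /C big_nat_recl // s0 mul1n subn0 -addnA; congr (_ + _).
under eq_bigr do rewrite sS mulnDl subSS.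
rewrite big_split /=; congr (_ + _).
case: ifP => h; last first.
  rewrite big1_seq // => k; rewrite mem_iota => /andP[_ hk].
  by rewrite ifF ?mul0n //; lia.
rewrite (@sum_split (m.+1)); last lia; last lia.
rewrite big1_seq ?add0n; last first.
  by move=> k; rewrite mem_iota => /andP[_ hk]; rewrite ifF ?mul0n //; lia.
rewrite sum_shift.
have -> : n.+1 - m.+1 = (n.+1 - (m + 2)).+1 by lia.
apply: eq_big_nat => i hi.
rewrite ifT; last lia.
congr (s _ * R _); lia.
Qed.

Lemma QC n : Q n = s n + 2 * C n.
Proof.
elim/ltn_ind: n => [[|n]] IH.
  by rewrite /C big_nat1 s0 R_small //; lia.
rewrite Qrec Crec sS (IH n) //.
case: ifP => h; last by rewrite !addn0; lia.
rewrite IH; last lia.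
lia.
Qed.

Lemma alg_main n :
  Q n = s n + 2 * \sum_(0 <= k < n - m - 1)
           \sum_(m + 2 <= r < (n - k).+1) F m 0 (r - 1) * s k * s (n - k - r) ^ 2.
Proof.
rewrite QC /C; congr (_ + 2 * _).
rewrite (@sum_split (n - m - 1)); last lia; last lia.
rewrite [X in _ + X]big1_seq ?addn0; last first.
  by move=> k; rewrite mem_iota => /andP[_ hk]; rewrite R_small ?muln0 //; lia.
apply: eq_big_nat => k hk.
rewrite /R big_distrr /=; apply: eq_big_nat => r hr.
by rewrite mulnCA mulnA.
Qed.
End Alg.

Lemma sum_pick1 N (P : pred nat) (g : nat -> nat) a : (forall v, P v = (v == a)) ->
  \sum_(v < N | P v) g v = if a < N then g a else 0.
Proof.
move=> hP; rewrite big_mkcond /=.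
case: (ltnP a N) => h.
  rewrite (bigD1 (Ordinal h)) //= hP eqxx big1 ?addn0 // => i hi.
  rewrite hP ifF //; apply/negbTE; apply: contra hi => /eqP hi.
  by apply/eqP/val_inj.
rewrite big1 // => i _; rewrite hP ifF //; apply/negbTE.
by apply/eqP => hi; move: (ltn_ord i); rewrite hi; lia.
Qed.

Lemma sum_pick2 N (P : pred nat) (g : nat -> nat) a b :
  (forall v, P v = (v == a) || (v == b)) -> a != b ->
  \sum_(v < N | P v) g v = (if a < N then g a else 0) + (if b < N then g b else 0).
Proof.
move=> hP hab; rewrite (bigID [pred v : 'I_N | val v == a]) /=.
congr (_ + _).
- apply: (@sum_pick1 N (fun v => P v && (v == a))) => v; rewrite hP.
  by case: eqP => [->|]; rewrite ?eqxx ?andbF.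
- apply: (@sum_pick1 N (fun v => P v && ~~ (v == a))) => v; rewrite hP.
  case: eqP => [->|]; first by rewrite (negbTE hab) andbF.
  by rewrite orFb andbT.
Qed.

Section Ext.
Variables m N : nat.

Definition cand (T v : nat) : bool := (v == T + m) || (v.+1 == T) || (v.+2 == T).
Definition okv (T : nat) (u : seq nat) (v : nat) : bool :=
  [&& cand T v, v \notin u & (T < 2) || (T - 2 \in u) || (v.+2 == T)].

Fixpoint ext (k T : nat) (u : seq nat) : nat :=
  match k with
  | 0 => 1
  | k'.+1 => \sum_(v < N | okv T u v) ext k' T.+1 (rcons u v)
  end.

Lemma extS k T u : ext k.+1 T u = \sum_(v < N | okv T u v) ext k T.+1 (rcons u v).
Proof. by []. Qed.

Lemma ext_pick1 k T u a : (forall v, okv T u v = (v == a)) ->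
  ext k.+1 T u = if a < N then ext k T.+1 (rcons u a) else 0.
Proof. by move=> h; rewrite extS (@sum_pick1 N (okv T u) (fun v => ext k T.+1 (rcons u v)) a). Qed.

Lemma ext_pick2 k T u a b : (forall v, okv T u v = (v == a) || (v == b)) -> a != b ->
  ext k.+1 T u = (if a < N then ext k T.+1 (rcons u a) else 0)
               + (if b < N then ext k T.+1 (rcons u b) else 0).
Proof. by move=> h hab; rewrite extS (@sum_pick2 N (okv T u) (fun v => ext k T.+1 (rcons u v)) a b). Qed.

Lemma ext_states k : forall T u, T + k = N ->
  ((forall x, (x \in u) = (x < T)) -> ext k T u = F m 0 k) /\
  (forall e, 1 <= T -> e < m -> e < k ->
     (forall x, (x \in u) = (x < T - 1) || (x == T + e)) -> ext k T u = F m e.+1 k) /\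
  (forall e, 2 <= T -> e < m -> e < k ->
     (forall x, (x \in u) = [|| x < T - 2, x == T - 1 | x == T + e]) ->
     ext k T u = (if k is k'.+1 then F m e k' else 0)) /\
  (forall e1 e2, 2 <= T -> e1 < e2 -> e2 < m -> e2 < k ->
     (forall x, (x \in u) = [|| x < T - 2, x == T + e1 | x == T + e2]) ->
     ext k T u = F m (e2 - e1 - 1) (k - e1 - 2)).
Proof.
elim: k => [|k IH] T u hN.
  split; first by [].
  by split; [move=> e _ _ //|split; [move=> e _ _ //| move=> e1 e2 _ _ _ //]].
have hTN : T < N by lia.
have mem_r : forall v x, (x \in rcons u v) = (x == v) || (x \in u).
  by move=> v x; rewrite mem_rcons in_cons.
have FS0 : forall j, F m 0 j.+1 = F m m j by move=> j; rewrite FS !subn0.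
split.
  move=> hu; rewrite (@ext_pick1 _ _ _ (T + m)); last first.
    by move=> v; rewrite /okv /cand !hu; lia.
  rewrite FS0; case: ifP => hmN; last by rewrite F_small //; lia.
  have [I0 [IA [IB IC]]] := IH T.+1 (rcons u (T + m)) ltac:(lia).
  case: (posnP m) => hm0.
    rewrite I0; first by rewrite hm0.
    by move=> x; rewrite mem_r hu; lia.
  have h1 : 1 <= T.+1 by [].
  have h2 : m - 1 < m by lia.
  have h3 : m - 1 < k by lia.
  have h4 : forall x, (x \in rcons u (T + m)) = (x < T.+1 - 1) || (x == T.+1 + (m - 1)).
    by move=> x; rewrite mem_r hu; lia.
  rewrite (IA _ h1 h2 h3 h4); congr (F _ _ _); lia.
split.
  move=> e hT he hek hu.
  rewrite (@ext_pick2 _ _ _ (T - 1) (T + m)); last (apply/eqP; lia); last first.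
    by move=> v; rewrite /okv /cand !hu; lia.
  rewrite FS ifT; last lia.
  have E1 : ext k T.+1 (rcons u (T - 1)) = F m e k.
    have [I0 [IA [IB IC]]] := IH T.+1 (rcons u (T - 1)) ltac:(lia).
    case: (posnP e) => he0.
      rewrite I0 ?he0 // => x; rewrite mem_r hu; lia.
    have h1 : 1 <= T.+1 by [].
    have h2 : e - 1 < m by lia.
    have h3 : e - 1 < k by lia.
    have h4 : forall x, (x \in rcons u (T - 1)) = (x < T.+1 - 1) || (x == T.+1 + (e - 1)).
      by move=> x; rewrite mem_r hu; lia.
    rewrite (IA _ h1 h2 h3 h4); congr (F _ _ _); lia.
  rewrite E1; congr (_ + _).
  case: ifP => hmN; last first.
    by case: ifP => // hek1; rewrite F_small //; lia.
  have [I0 [IA [IB IC]]] := IH T.+1 (rcons u (T + m)) ltac:(lia).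
  case: (posnP e) => he0.
    have h1 : 2 <= T.+1 by lia.
    have h2 : m - 1 < m by lia.
    have h3 : m - 1 < k by lia.
    have h4 : forall x, (x \in rcons u (T + m)) =
       [|| x < T.+1 - 2, x == T.+1 - 1 | x == T.+1 + (m - 1)].
      by move=> x; rewrite mem_r hu; lia.
    rewrite (IB _ h1 h2 h3 h4).
    case: k {IH I0 IA IB IC h3 h4 hek E1} hN hmN => [|k] hN hmN; first lia.
    rewrite ifT; last lia.
    congr (F _ _ _); lia.
  have h1 : 2 <= T.+1 by lia.
  have h2 : e - 1 < m - 1 by lia.
  have h3 : m - 1 < m by lia.
  have h4 : m - 1 < k by lia.
  have h5 : forall x, (x \in rcons u (T + m)) =
     [|| x < T.+1 - 2, x == T.+1 + (e - 1) | x == T.+1 + (m - 1)].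
    by move=> x; rewrite mem_r hu; lia.
  rewrite (IC _ _ h1 h2 h3 h4 h5) ifT; last lia.
  congr (F _ _ _); lia.
split.
  move=> e hT he hek hu.
  rewrite (@ext_pick1 _ _ _ (T - 2)); last first.
    by move=> v; rewrite /okv /cand !hu; lia.
  rewrite ifT; last lia.
  have [I0 [IA [IB IC]]] := IH T.+1 (rcons u (T - 2)) ltac:(lia).
  case: (posnP e) => he0.
    rewrite I0 ?he0 // => x; rewrite mem_r hu; lia.
  have h1 : 1 <= T.+1 by [].
  have h2 : e - 1 < m by lia.
  have h3 : e - 1 < k by lia.
  have h4 : forall x, (x \in rcons u (T - 2)) = (x < T.+1 - 1) || (x == T.+1 + (e - 1)).
    by move=> x; rewrite mem_r hu; lia.
  rewrite (IA _ h1 h2 h3 h4); congr (F _ _ _); lia.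
move=> e1 e2 hT h12 h2m h2k hu.
rewrite (@ext_pick1 _ _ _ (T - 2)); last first.
  by move=> v; rewrite /okv /cand !hu; lia.
rewrite ifT; last lia.
have [I0 [IA [IB IC]]] := IH T.+1 (rcons u (T - 2)) ltac:(lia).
case: (posnP e1) => he0.
  have h1 : 2 <= T.+1 by lia.
  have h2 : e2 - 1 < m by lia.
  have h3 : e2 - 1 < k by lia.
  have h4 : forall x, (x \in rcons u (T - 2)) =
     [|| x < T.+1 - 2, x == T.+1 - 1 | x == T.+1 + (e2 - 1)].
    by move=> x; rewrite mem_r hu; lia.
  rewrite (IB _ h1 h2 h3 h4).
  case: k {IH I0 IA IB IC h4} h3 hN h2k => [|k] h3 hN h2k; first lia.
  congr (F _ _ _); lia.
have h1 : 2 <= T.+1 by lia.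
have h2 : e1 - 1 < e2 - 1 by lia.
have h3 : e2 - 1 < m by lia.
have h4 : e2 - 1 < k by lia.
have h5 : forall x, (x \in rcons u (T - 2)) =
   [|| x < T.+1 - 2, x == T.+1 + (e1 - 1) | x == T.+1 + (e2 - 1)].
  by move=> x; rewrite mem_r hu; lia.
rewrite (IC _ _ h1 h2 h3 h4 h5).
congr (F _ _ _); lia.
Qed.
End Ext.

Lemma intc (a b m : nat) : (((a%:Z - b%:Z)%R \in [:: (-2)%Z; (-1)%Z; Posz m]) =
   (a == b + m) || (a.+1 == b) || (a.+2 == b)).
Proof. rewrite !in_cons in_nil orbF. lia. Qed.

Section Perm.
Variables m N : nat.

Definition Sset (T : nat) (p : seq nat) : {set 'S_N} :=
  [set s : 'S_N | [forall i : 'I_N, if i < T then val (s i) == nth 0 p i else cand m i (s i)]].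

Lemma Sset_base p : size p = N -> uniq p -> all (fun x => x < N) p -> #|Sset N p| = 1.
Proof.
move=> hs hu ha.
have Hf : forall i : 'I_N, nth 0 p i < N.
  by move=> i; apply: (all_nthP 0 ha); rewrite hs.
pose f := fun i : 'I_N => Ordinal (Hf i).
have finj : injective f.
  move=> i j /(congr1 val) /= /eqP; rewrite nth_uniq ?hs // => /eqP h.
  exact: val_inj.
apply/eqP; apply/cards1P; exists (perm finj); apply/setP => s.
rewrite !inE; apply/forallP/eqP.
  move=> h; apply/permP => i; rewrite permE; apply: val_inj => /=.
  by move: (h i); rewrite ltn_ord => /eqP.
by move=> -> i; rewrite ltn_ord permE.
Qed.

Lemma Sset_card k : forall T p, T + k = N -> size p = T -> uniq p ->
  all (fun x => x < N) p -> #|Sset T p| = ext m N k T p.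
Proof.
elim: k => [|k IH] T p hN hs hu ha.
  by rewrite addn0 in hN; rewrite hN in hs *; rewrite Sset_base.
have hT : T < N by lia.
pose t := Ordinal hT.
rewrite extS big_mkcond /=.
rewrite -sum1_card (partition_big (fun s : 'S_N => s t) predT) //=.
apply: eq_bigr => v _.
rewrite sum1dep_card.
have key : forall s, s \in Sset T p -> s t = v -> okv m T p v.
  move=> s; rewrite inE => /forallP hs1 hsv.
  apply/and3P; split.
  - by have := hs1 t; rewrite /= ltnn hsv.
  - apply/negP => vp.
    have hj : index (nat_of_ord v) p < T by rewrite -hs index_mem.
    pose j := Ordinal (ltn_trans hj hT).
    have := hs1 j; rewrite /= hj nth_index // => /eqP H.
    have : s j = s t by apply: ord_inj; rewrite H hsv.
    by move/perm_inj => /(congr1 (@nat_of_ord N)) /=; lia.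
  - case: (ltnP T 2) => hT2; first by [].
    have hw : T - 2 < N by lia.
    pose w := Ordinal hw.
    pose j := (s^-1)%g w.
    have sj : s j = w by rewrite permKV.
    have := hs1 j; case: ifP => hjT.
      move/eqP; rewrite sj /= => H.
      by apply/orP; left; rewrite H mem_nth // hs.
    rewrite /cand sj /= => hc.
    have ejt : j = t by apply: val_inj => /=; lia.
    rewrite ejt hsv in sj; rewrite sj /=.
    by apply/orP; right; lia.
case: ifP => hok.
  rewrite -IH ?size_rcons ?hs ?rcons_uniq ?all_rcons //; last first.
    by rewrite ltn_ord ha.
    by rewrite hu andbT; move: hok => /and3P[].
    lia.
  apply: eq_card => s; rewrite !inE.
  apply/andP/forallP.
    case=> /forallP h /eqP hv i; have := h i.
    case: (ltnP i T) => hiT.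
      by rewrite ltnS (ltnW hiT) nth_rcons hs hiT.
    case: (eqVneq (nat_of_ord i) T) => hiT'.
      have -> : i = t by apply: val_inj.
      by rewrite /= ltnSn nth_rcons hs ltnn eqxx hv.
    by rewrite ifF //; lia.
  move=> h; split.
    apply/forallP => i; have := h i.
    case: (ltnP i T) => hiT.
      by rewrite ltnS (ltnW hiT) nth_rcons hs hiT.
    case: (eqVneq (nat_of_ord i) T) => hiT'.
      have -> : i = t by apply: val_inj.
      rewrite /= ltnSn nth_rcons hs ltnn eqxx => /eqP H.
      have -> : s t = v by apply: val_inj.
      by move: hok => /and3P[].
    by rewrite ifF //; lia.
  apply/eqP; apply: val_inj; have := h t.
  by rewrite /= ltnSn nth_rcons hs ltnn eqxx => /eqP.
rewrite (@eq_card _ _ pred0) ?card0 // => s; rewrite !inE.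
apply/negbTE/negP => /andP[hs1 /eqP hs2].
by have := key s; rewrite inE => /(_ hs1 hs2); rewrite hok.
Qed.
End Perm.

Lemma Pperm_F m N : Pperm [:: (-2)%Z; (-1)%Z; Posz m] N = F m 0 N.
Proof.
rewrite /Pperm.
have -> : [set sigma : 'S_N | [forall i : 'I_N,
            ((sigma i)%:Z - (i : nat)%:Z)%R \in [:: (-2)%Z; (-1)%Z; Posz m]]]
          = Sset m N 0 [::].
  apply/setP => s; rewrite !inE; apply: eq_forallb => i.
  by rewrite intc.
rewrite (@Sset_card m N N) //.
have [H _] := @ext_states m N N 0 [::] (add0n N).
by apply: H.
Qed.

Theorem mainTheorem9 (m n : nat) :
  (sseq 1 (m + 2) n ^ 2 =
   sseq 1 (m + 2) n
   + 2 * \sum_(0 <= k < n - m - 1)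
           \sum_(m + 2 <= r < (n - k).+1)
              Pperm [:: (-2)%Z; (-1)%Z; Posz m] (r - 1)
              * sseq 1 (m + 2) k * sseq 1 (m + 2) (n - k - r) ^ 2)%N.
Proof.
rewrite (alg_main m n); congr (_ + 2 * _).
apply: eq_big_nat => k _; apply: eq_big_nat => r _.
by rewrite Pperm_F.
Qed.
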